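(* Let $\mathcal{C}$ be a finite Coxeter group of rank $p$, realized as a group of real orthogonal $p\times p$ matrices acting on $V=\mathbb{R}^p$. Let $R$ and $\bar R$ be two elements of $\mathcal{C}$ (each a product of reflections $R_v$ in root vectors, or the identity), and consider the linearized covariant derivative $$D f=\Big[D_L+\delta^{nm}e^{\alpha\dot\alpha}(P_+)_{nm}{}^{kl}\,(y_{\alpha k}\hat{\bar\partial}_{\dot\alpha l}+\bar y_{\dot\alpha l}\hat\partial_{\alpha k})-i\,\delta^{nm}e^{\alpha\dot\alpha}(P_-)_{nm}{}^{kl}\,(y_{\alpha k}\bar y_{\dot\alpha l}-\hat\partial_{\alpha k}\hat{\bar\partial}_{\dot\alpha l})\Big]f,$$ with $P_\pm^{kl}=\tfrac12\delta^{nm}\big(\mathbb{1}^k_n\bar{\mathbb{1}}^l_m\pm R^k{}_n\bar R^l{}_m\big)$, acting on functions $f(y_1,\dots,y_p,\bar y_1,\dots,\bar y_p|x)$. Then the corresponding module is disentangled (i.e. isomorphic to a tensor product of standard adjoint and twisted-adjoint modules of the standard $4d$ higher-spin theory) if and only if $(R\bar R^{T})^2=\mathbb{1}$.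
   Context: Variables: for each $n\in\{1,\dots,p\}$ there are commuting two-component spinor variables $y^\alpha_n$ ($\alpha=1,2$) and $\bar y^{\dot\alpha}_n$ ($\dot\alpha=1,2$), with real-conjugate pairing $y^\dagger=\bar y$; $\partial_{\alpha n}=\partial/\partial y^\alpha_n$, $\bar\partial_{\dot\alpha n}=\partial/\partial\bar y^{\dot\alpha}_n$ (hats denote dressing by idempotents and may be ignored here). $e^{\alpha\dot\alpha}$ is the $AdS_4$ vierbein one-form and $D_L=d_x+\delta^{nm}(\omega^{\alpha\beta}y_{\alpha n}\partial_{\beta m}+\bar\omega^{\dot\alpha\dot\beta}\bar y_{\dot\alpha n}\bar\partial_{\dot\beta m})$ is the Lorentz covariant derivative built from the $AdS_4$ spin connection. The standard adjoint module of the $4d$ higher-spin theory (for a single pair $y,\bar y$) is defined by the operator $D_L+e^{\alpha\dot\alpha}(y_\alpha\bar\partial_{\dot\alpha}+\bar y_{\dot\alpha}\partial_\alpha)$, and the standard twisted-adjoint module by $D_L-ie^{\alpha\dot\alpha}(y_\alpha\bar y_{\dot\alpha}-\partial_\alpha\bar\partial_{\dot\alpha})$. A module defined by $D$ is called disentangled if, after a real (orthogonal) linear change of the Coxeter labels $n$ of the variables $y_n,\bar y_n$, the operator $D$ becomes a sum over the new labels of standard adjoint or twisted-adjoint operators each acting on one pair of variables, i.e. the module is isomorphic to a tensor product of standard adjoint and twisted-adjoint modules; otherwise it is called entangled. *)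

(* Defs.v *)
From HB Require Import structures.
From mathcomp Require Import all_boot all_order all_algebra.
From mathcomp Require Import mpoly.
From mathcomp Require Import complex.
From mathcomp Require Import reals.
Set Implicit Arguments. Unset Strict Implicit. Unset Printing Implicit Defensive.
Import Order.TTheory GRing.Theory Num.Theory.
Local Open Scope ring_scope.
Local Open Scope complex_scope.

Section HS.
Variables (R : realType) (p : nat).
Local Notation C := (R[i]).

Definition reflection (v : 'rV[R]_p) : 'M[R]_p :=
  1%:M - ((2 / (v *m v^T) 0 0) *: (v^T *m v)).

Definition refl_prod (vs : seq 'rV[R]_p) : 'M[R]_p :=
  foldr (fun v M => reflection v *m M) 1%:M vs.

Definition in_reflgroup (roots : seq 'rV[R]_p) (M : 'M[R]_p) : Prop :=
  exists vs : seq 'rV[R]_p, all (fun v => v \in roots) vs /\ M = refl_prod vs.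

Definition finite_coxeter (roots : seq 'rV[R]_p) : Prop :=
  [/\ all (fun v => v != 0) roots,
      (\sum_(v <- roots) <<v>> == 1%:M)%MS
    & exists elts : seq 'M[R]_p,
        forall M, in_reflgroup roots M -> M \in elts].

Definition orthogonal (O : 'M[R]_p) : Prop := O *m O^T = 1%:M.

(* a variable is (barred?, spinor index, Coxeter label):
   (false, a, n) is y^a_n and (true, a, n) is ybar^{a-dot}_n *)
Definition vlabel := (bool * 'I_2 * 'I_p)%type.
Definition nvar := #|{: vlabel}|.
Definition Poly := {mpoly C[nvar]}.

Definition var (b : bool) (a : 'I_2) (n : 'I_p) : Poly :=
  'X_(enum_rank (b, a, n)).

(* epsilon symbol, eps_{12} = 1 *)
Definition eps (a c : 'I_2) : C :=
  if (val a == 0%N) && (val c == 1%N) then 1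
  else if (val a == 1%N) && (val c == 0%N) then -1 else 0.

Definition ylo (b : bool) (a : 'I_2) (n : 'I_p) : Poly :=
  \sum_(c < 2) eps c a *: var b c n.

Definition der (b : bool) (a : 'I_2) (n : 'I_p) (f : Poly) : Poly :=
  mderiv (enum_rank (b, a, n)) f.

Definition cR (x : R) : C := x%:C.

Definition Pplus (Rm Rb : 'M[R]_p) (k l : 'I_p) : C :=
  cR (2^-1 * \sum_(n < p) ((1%:M : 'M[R]_p) k n * (1%:M : 'M[R]_p) l n + Rm k n * Rb l n)).
Definition Pminus (Rm Rb : 'M[R]_p) (k l : 'I_p) : C :=
  cR (2^-1 * \sum_(n < p) ((1%:M : 'M[R]_p) k n * (1%:M : 'M[R]_p) l n - Rm k n * Rb l n)).

(* The e^{a adot} component of D - D_L, acting on f(y, ybar) *)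
Definition Dvier (Rm Rb : 'M[R]_p) (a ad : 'I_2) (f : Poly) : Poly :=
  \sum_(k < p) \sum_(l < p)
    ( Pplus Rm Rb k l *: (ylo false a k * der true ad l f + ylo true ad l * der false a k f)
    - ('i * Pminus Rm Rb k l) *: (ylo false a k * ylo true ad l * f
                                  - der false a k (der true ad l f))).

(* e^{a adot} components of the standard adjoint / twisted-adjoint operators
   acting on the single pair of variables with label n *)
Definition Dadj (n : 'I_p) (a ad : 'I_2) (f : Poly) : Poly :=
  ylo false a n * der true ad n f + ylo true ad n * der false a n f.
Definition Dtw (n : 'I_p) (a ad : 'I_2) (f : Poly) : Poly :=
  - ('i *: (ylo false a n * ylo true ad n * f - der false a n (der true ad n f))).

(* real linear change of Coxeter labels: y'_n = O_{nm} y_m, ybar'_n = O_{nm} ybar_m.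
   relabel O g is a function g of the new variables written in the old ones. *)
Definition relabel_var (O : 'M[R]_p) (j : 'I_nvar) : Poly :=
  let: (b, a, n) := enum_val j in \sum_(m < p) cR (O n m) *: var b a m.
Definition relabel (O : 'M[R]_p) (g : Poly) : Poly :=
  mmap (@mpolyC _ C) (relabel_var O) g.

(* disentangled: after an orthogonal relabelling, D becomes a sum over the new
   labels of standard adjoint (s n = true) or twisted-adjoint (s n = false)
   operators, each acting on one pair.  (D_L and d_x are label-invariant and
   common to both sides.) *)
Definition disentangled (Rm Rb : 'M[R]_p) : Prop :=
  exists O : 'M[R]_p, exists s : 'I_p -> bool,
    orthogonal O /\
    forall (a ad : 'I_2) (g : Poly),
      Dvier Rm Rb a ad (relabel O g)
      = relabel O (\sum_(n < p) (if s n then Dadj n a ad g else Dtw n a ad g)).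

End HS.

(* Main.v *)
Require Import Defs.
From HB Require Import structures.
From mathcomp Require Import all_boot all_order all_algebra.
From mathcomp Require Import mpoly complex reals.
From mathcomp Require Import ring.
Import Order.TTheory GRing.Theory Num.Theory.
Local Open Scope ring_scope.
Local Open Scope complex_scope.
Section PolyPart.
Variables (R : realType) (p : nat).
Local Notation Pl := (Defs.Poly R p).
Local Notation C := (R[i]).
Local Notation var := (@Defs.var R p).
Local Notation ylo := (@Defs.ylo R p).
Local Notation der := (@Defs.der R p).
Implicit Types (O : 'M[R]_p) (f g : Pl).

Lemma cRM (x y : R) : cR (x * y) = cR x * cR y.
Proof. exact: rmorphM. Qed.
Lemma cRD (x y : R) : cR (x + y) = cR x + cR y.
Proof. exact: rmorphD. Qed.
Lemma cR_sum (I : Type) (r : seq I) (P : pred I) (F : I -> R) :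
  cR (\sum_(i <- r | P i) F i) = \sum_(i <- r | P i) cR (F i).
Proof. exact: rmorph_sum. Qed.

Lemma relabelM O f g : relabel O (f * g) = relabel O f * relabel O g.
Proof. exact: rmorphM. Qed.
Lemma relabelD O f g : relabel O (f + g) = relabel O f + relabel O g.
Proof. exact: rmorphD. Qed.
Lemma relabelB O f g : relabel O (f - g) = relabel O f - relabel O g.
Proof. exact: rmorphB. Qed.
Lemma relabelN O f : relabel O (- f) = - relabel O f.
Proof. exact: rmorphN. Qed.
Lemma relabel1 O : relabel O 1 = 1.
Proof. exact: rmorph1. Qed.
Lemma relabel_sum O (I : Type) (r : seq I) (P : pred I) (F : I -> Pl) :
  relabel O (\sum_(i <- r | P i) F i) = \sum_(i <- r | P i) relabel O (F i).
Proof. exact: rmorph_sum. Qed.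
Lemma relabelZ O (c : C) f : relabel O (c *: f) = c *: relabel O f.
Proof. by rewrite /relabel mmapZ mul_mpolyC. Qed.
Lemma relabelC O (c : C) : relabel O c%:MP = c%:MP.
Proof. by rewrite /relabel mmapC. Qed.

Lemma relabelX O j : relabel O 'X_j = relabel_var O j.
Proof. by rewrite /relabel mmapX mmap1U. Qed.

Lemma relabel_var_E O b a n :
  relabel O (var b a n) = \sum_(m < p) cR (O n m) *: var b a m.
Proof. by rewrite /var relabelX /relabel_var enum_rankK. Qed.

Lemma relabel_ylo O b a n :
  relabel O (ylo b a n) = \sum_(m < p) cR (O n m) *: ylo b a m.
Proof.
rewrite /ylo relabel_sum.
under eq_bigr do rewrite relabelZ relabel_var_E scaler_sumr.
rewrite exchange_big /=; apply: eq_bigr => m _.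
by rewrite scaler_sumr; apply: eq_bigr => c _; rewrite !scalerA mulrC.
Qed.

Lemma der_var b a k b' a' m :
  der b a k (var b' a' m) = ((b', a', m) == (b, a, k))%:R.
Proof.
rewrite /der /var mderivX mnm1E.
have [e|ne] := eqVneq (b', a', m) (b, a, k).
  rewrite e eqxx /= (_ : (U_(_) - U_(_))%MM = 0%MM) ?mpolyX0 ?scale1r //.
  by apply/mnmP => j; rewrite mnmBE mnm0E subnn.
rewrite (_ : (enum_rank (b', a', m) == enum_rank (b, a, k)) = false).
  by rewrite scale0r.
by apply/negbTE; apply: contra ne => /eqP /enum_rank_inj ->.
Qed.


Definition Tc O b a k g : Pl :=
  der b a k (relabel O g) - \sum_(n < p) cR (O n k) *: relabel O (der b a n g).

Lemma derD b a k f g : der b a k (f + g) = der b a k f + der b a k g.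
Proof. exact: mderivD. Qed.
Lemma derB b a k f g : der b a k (f - g) = der b a k f - der b a k g.
Proof. exact: mderivB. Qed.
Lemma derZ b a k (c : C) f : der b a k (c *: f) = c *: der b a k f.
Proof. exact: mderivZ. Qed.
Lemma derM b a k f g : der b a k (f * g) = der b a k f * g + f * der b a k g.
Proof. exact: mderivM. Qed.
Lemma der1 b a k : der b a k 1 = 0.
Proof. by rewrite /der -mpolyX0 mderivX mnm0E scale0r. Qed.
Lemma der_sum b a k (I : Type) (r : seq I) (P : pred I) (F : I -> Pl) :
  der b a k (\sum_(i <- r | P i) F i) = \sum_(i <- r | P i) der b a k (F i).
Proof. exact: raddf_sum. Qed.

Lemma alg1 (A B S1 S2 S3 x y : Pl) : S3 = S1 * y + x * S2 ->
  A * y + x * B - S3 = (A - S1) * y + x * (B - S2).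
Proof. by move->; rewrite mulrBl mulrBr opprD addrACA. Qed.
Lemma scAl (c : C) (x y : Pl) : c *: (x * y) = (c *: x) * y.
Proof. by rewrite -!mul_mpolyC mulrA. Qed.
Lemma scAr (c : C) (x y : Pl) : c *: (x * y) = x * (c *: y).
Proof. by rewrite -!mul_mpolyC mulrCA. Qed.
Section Chain.
Variables (phi : Pl -> Pl) (d1 : Pl -> Pl) (d2 : 'I_p -> Pl -> Pl) (w : 'I_p -> C).
Hypothesis phiD : forall f g, phi (f + g) = phi f + phi g.
Hypothesis phiM : forall f g, phi (f * g) = phi f * phi g.
Hypothesis phiZ : forall (c : C) f, phi (c *: f) = c *: phi f.
Hypothesis phi1 : phi 1 = 1.
Hypothesis d1D : forall f g, d1 (f + g) = d1 f + d1 g.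
Hypothesis d1M : forall f g, d1 (f * g) = d1 f * g + f * d1 g.
Hypothesis d1Z : forall (c : C) f, d1 (c *: f) = c *: d1 f.
Hypothesis d2D : forall n f g, d2 n (f + g) = d2 n f + d2 n g.
Hypothesis d2M : forall n f g, d2 n (f * g) = d2 n f * g + f * d2 n g.
Hypothesis d2Z : forall n (c : C) f, d2 n (c *: f) = c *: d2 n f.

Definition TT g := d1 (phi g) - \sum_(n < p) w n *: phi (d2 n g).

Lemma phi0 : phi 0 = 0.
Proof. by have := phiD 0 0; rewrite addr0 => H; apply: (addrI (phi 0)); rewrite addr0 -H. Qed.
Lemma d1_0 : d1 0 = 0.
Proof. by have := d1D 0 0; rewrite addr0 => H; apply: (addrI (d1 0)); rewrite addr0 -H. Qed.
Lemma d2_0 n : d2 n 0 = 0.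
Proof. by have := d2D n 0 0; rewrite addr0 => H; apply: (addrI (d2 n 0)); rewrite addr0 -H. Qed.
Lemma d1_1 : d1 1 = 0.
Proof. by have := d1M 1 1; rewrite !mulr1 mul1r => H; apply: (addrI (d1 1)); rewrite addr0 -H. Qed.
Lemma d2_1 n : d2 n 1 = 0.
Proof. by have := d2M n 1 1; rewrite !mulr1 mul1r => H; apply: (addrI (d2 n 1)); rewrite addr0 -H. Qed.

Lemma TT_M f g : TT (f * g) = TT f * phi g + phi f * TT g.
Proof.
rewrite /TT phiM d1M; apply: alg1.
rewrite mulr_suml mulr_sumr -big_split; apply: eq_bigr => n _.
by rewrite d2M phiD !phiM scalerDr -scAl -scAr.
Qed.

Lemma TT_L (c : C) f g : TT (c *: f + g) = c *: TT f + TT g.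
Proof.
rewrite /TT phiD phiZ d1D d1Z.
have -> : \sum_(n < p) w n *: phi (d2 n (c *: f + g)) =
   c *: (\sum_(n < p) w n *: phi (d2 n f)) + \sum_(n < p) w n *: phi (d2 n g).
  rewrite scaler_sumr -big_split; apply: eq_bigr => n _.
  by rewrite d2D d2Z phiD phiZ scalerDr !scalerA mulrC.
by rewrite scalerBr opprD addrACA.
Qed.

Lemma TT_1 : TT 1 = 0.
Proof.
rewrite /TT phi1 d1_1 big1 ?subrr // => n _.
by rewrite d2_1 phi0 scaler0.
Qed.

Lemma TT_X : (forall j, TT 'X_j = 0) -> forall g, TT g = 0.
Proof.
move=> TX; have TXn j k : TT ('X_j ^+ k) = 0.
  elim: k => [|k IH]; first by rewrite expr0 TT_1.
  by rewrite exprS TT_M TX IH mul0r mulr0 addr0.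
have TXm m : TT 'X_[m] = 0.
  rewrite mpolyXE_id; apply: (big_ind (fun x => TT x = 0)); first exact: TT_1.
    by move=> x y Hx Hy; rewrite TT_M Hx Hy mul0r mulr0 addr0.
  by move=> i _; apply: TXn.
elim/mpolyind => [|c m q _ _ IH].
  rewrite /TT phi0 d1_0 big1 ?subrr // => n _.
  by rewrite d2_0 phi0 scaler0.
by rewrite TT_L TXm IH scaler0 addr0.
Qed.
End Chain.
Lemma sc_nat (c : C) (e : bool) : c *: (e%:R : Pl) = (if e then c%:MP else 0).
Proof. by case: e; rewrite ?scaler0 // -alg_mpolyC. Qed.

Lemma relabel_nat O (e : nat) : relabel O (e%:R) = e%:R.
Proof. exact: rmorph_nat. Qed.

Lemma sum_delta (F : 'I_p -> Pl) k :
  \sum_(m < p) (if m == k then F m else 0) = F k.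
Proof. by rewrite (bigD1 k) //= eqxx big1 ?addr0 // => i /negbTE ->. Qed.

Lemma chain O b a k g :
  der b a k (relabel O g) = \sum_(n < p) cR (O n k) *: relabel O (der b a n g).
Proof.
apply/eqP; rewrite -subr_eq0; apply/eqP.
have := @TT_X (relabel O) (der b a k) (der b a) (fun n => cR (O n k)).
apply.
- exact: relabelD.
- exact: relabelM.
- exact: relabelZ.
- exact: relabel1.
- exact: derD.
- exact: derM.
- exact: derZ.
- by move=> *; apply: derD.
- by move=> *; apply: derM.
- by move=> *; apply: derZ.
move=> j; rewrite /TT relabelX /relabel_var.
case E: (enum_val j) => [[b' a'] n'].
have -> : 'X_j = var b' a' n' by rewrite /Defs.var -E enum_valK.
rewrite der_sum.
under eq_bigr do rewrite derZ der_var sc_nat.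
under [X in _ - X]eq_bigr do rewrite der_var relabel_nat sc_nat.
apply/eqP; rewrite subr_eq0; apply/eqP.
transitivity (if (b' == b) && (a' == a) then (cR (O n' k))%:MP else 0 : Pl).
  rewrite (eq_bigr (fun i => if i == k then (if (b' == b) && (a' == a) then (cR (O n' i))%:MP else 0) else 0)).
    by rewrite sum_delta.
  by move=> i _; rewrite !xpair_eqE; case: (b' == b); case: (a' == a); case: (i == k).
rewrite (eq_bigr (fun i => if i == n' then (if (b' == b) && (a' == a) then (cR (O i k))%:MP else 0) else 0)).
  by rewrite sum_delta.
by move=> i _; rewrite !xpair_eqE [i == n']eq_sym; case: (b' == b); case: (a' == a); case: (n' == i).
Qed.
End PolyPart.

Section Abs.
Variables (R : realType) (p : nat).
Local Notation Pl := (Defs.Poly R p).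
Local Notation C := (R[i]).
Variables (O : 'M[R]_p) (phi : Pl -> Pl) (d : bool -> 'I_2 -> 'I_p -> Pl -> Pl)
  (Y : bool -> 'I_2 -> 'I_p -> Pl).
Hypothesis phiD : forall f g, phi (f + g) = phi f + phi g.
Hypothesis phiM : forall f g, phi (f * g) = phi f * phi g.
Hypothesis phiZ : forall (c : C) f, phi (c *: f) = c *: phi f.
Hypothesis dD : forall b a k f g, d b a k (f + g) = d b a k f + d b a k g.
Hypothesis dZ : forall b a k (c : C) f, d b a k (c *: f) = c *: d b a k f.
Hypothesis chain : forall b a k g,
  d b a k (phi g) = \sum_(n < p) cR (O n k) *: phi (d b a n g).
Hypothesis Ychain : forall b a k,
  Y b a k = \sum_(n < p) cR (O n k) *: phi (Y b a n).

Lemma phi0' : phi 0 = 0.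
Proof. by have := phiD 0 0; rewrite addr0 => H; apply: (addrI (phi 0)); rewrite addr0 -H. Qed.
Lemma phiN' f : phi (- f) = - phi f.
Proof. by apply: (addrI (phi f)); rewrite -phiD !subrr phi0'. Qed.
Lemma phiB f g : phi (f - g) = phi f - phi g.
Proof. by rewrite phiD phiN'. Qed.
Lemma d0' b a k : d b a k 0 = 0.
Proof. by have := dD b a k 0 0; rewrite addr0 => H; apply: (addrI (d b a k 0)); rewrite addr0 -H. Qed.
Lemma d_sum b a k (F : 'I_p -> Pl) :
  d b a k (\sum_(n < p) F n) = \sum_(n < p) d b a k (F n).
Proof.
by apply: (big_morph (d b a k)) => [f g|]; [apply: dD | apply: d0'].
Qed.

Lemma prodsum (u v : 'I_p -> C) (x y : 'I_p -> Pl) :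
  (\sum_(n < p) u n *: x n) * (\sum_(m < p) v m *: y m) =
  \sum_(n < p) \sum_(m < p) (u n * v m) *: (x n * y m).
Proof.
rewrite mulr_suml; apply: eq_bigr => n _.
rewrite mulr_sumr; apply: eq_bigr => m _.
by rewrite -(scAl R p) -(scAr R p) scalerA.
Qed.


Definition Ap a ad g n m := Y false a n * d true ad m g + Y true ad m * d false a n g.
Definition Bp a ad g n m := Y false a n * Y true ad m * g - d false a n (d true ad m g).

Lemma A_step a ad g k l :
  Y false a k * d true ad l (phi g) + Y true ad l * d false a k (phi g) =
  \sum_(n < p) \sum_(m < p) cR (O n k * O m l) *: phi (Ap a ad g n m).
Proof.
rewrite [Y false a k]Ychain [Y true ad l]Ychain !chain !prodsum.
rewrite [X in _ + X = _]exchange_big /= -big_split; apply: eq_bigr => n _.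
rewrite -big_split; apply: eq_bigr => m _.
by rewrite /Ap phiD !phiM scalerDr (cRM R) [cR (O m l) * _]mulrC.
Qed.

Lemma B_step a ad g k l :
  Y false a k * Y true ad l * phi g - d false a k (d true ad l (phi g)) =
  \sum_(n < p) \sum_(m < p) cR (O n k * O m l) *: phi (Bp a ad g n m).
Proof.
rewrite [Y false a k]Ychain [Y true ad l]Ychain chain prodsum d_sum.
under [X in _ - X = _]eq_bigr do rewrite dZ chain scaler_sumr.
rewrite [X in _ - X = _]exchange_big /= mulr_suml -sumrB; apply: eq_bigr => n _.
rewrite mulr_suml -sumrB; apply: eq_bigr => m _.
by rewrite /Bp phiB !phiM scalerBr scalerA (cRM R) [cR (O m l) * _]mulrC -(scAl R p).
Qed.

Lemma L_mat (P : 'M[R]_p) (X : 'I_p -> 'I_p -> Pl) :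
  \sum_(k < p) \sum_(l < p) cR (P k l) *: (\sum_(n < p) \sum_(m < p) cR (O n k * O m l) *: X n m)
  = \sum_(n < p) \sum_(m < p) cR ((O *m P *m O^T) n m) *: X n m.
Proof.
transitivity (\sum_(k < p) \sum_(l < p) \sum_(n < p) \sum_(m < p)
     cR (O n k * P k l * O m l) *: X n m).
  apply: eq_bigr => k _; apply: eq_bigr => l _.
  rewrite scaler_sumr; apply: eq_bigr => n _.
  rewrite scaler_sumr; apply: eq_bigr => m _.
  by rewrite scalerA -cRM mulrA [P k l * _]mulrC.
transitivity (\sum_(n < p) \sum_(m < p) \sum_(l < p) \sum_(k < p)
     cR (O n k * P k l * O m l) *: X n m); last first.
  apply: eq_bigr => n _; apply: eq_bigr => m _.
  rewrite !mxE cR_sum scaler_suml; apply: eq_bigr => l _.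
  rewrite !mxE mulr_suml cR_sum scaler_suml; apply: eq_bigr => k _.
  by [].

rewrite exchange_big /=.
under eq_bigr do rewrite exchange_big /=.
under eq_bigr do under eq_bigr do rewrite exchange_big /=.
rewrite exchange_big /=.
by under eq_bigr do rewrite exchange_big /=.
Qed.

Definition DV (P Q : 'M[R]_p) a ad f : Pl :=
  \sum_(k < p) \sum_(l < p)
    ( cR (P k l) *: (Y false a k * d true ad l f + Y true ad l * d false a k f)
    - ('i * cR (Q k l)) *: (Y false a k * Y true ad l * f - d false a k (d true ad l f))).

Lemma DV_phi P Q a ad g :
  DV P Q a ad (phi g) =
  \sum_(n < p) \sum_(m < p) cR ((O *m P *m O^T) n m) *: phi (Ap a ad g n m)
  - 'i *: \sum_(n < p) \sum_(m < p) cR ((O *m Q *m O^T) n m) *: phi (Bp a ad g n m).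
Proof.
rewrite -!L_mat /DV scaler_sumr -sumrB; apply: eq_bigr => k _.
rewrite scaler_sumr -sumrB; apply: eq_bigr => l _.
by rewrite A_step B_step scalerA.
Qed.

Lemma diag_sum (D : 'M[R]_p) (t : 'I_p -> bool) (X : 'I_p -> 'I_p -> Pl) :
  (forall n m, D n m = ((n == m) && t n)%:R) ->
  \sum_(n < p) \sum_(m < p) cR (D n m) *: X n m = \sum_(n < p) (if t n then X n n else 0).
Proof.
move=> HD; apply: eq_bigr => n _.
rewrite (bigD1 n) //= big1 ?addr0 => [|m /negbTE nm].
  by rewrite HD eqxx /=; case: (t n); rewrite /cR ?scale1r ?scale0r.
by rewrite HD eq_sym nm /= /cR scale0r.
Qed.
End Abs.

Section Mat.
Variable R : realType.

Lemma vvT_neq0 n (v : 'rV[R]_n) : v != 0 -> (v *m v^T) 0 0 != 0.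
Proof.
move=> vnz; apply/negP => /eqP H; apply: (negP vnz); apply/eqP/rowP => j.
move: H; rewrite mxE => /eqP; rewrite psumr_eq0 => [/allP H|i _].
  have := H j (mem_index_enum _); rewrite !mxE => /eqP /eqP.
  by rewrite mulf_eq0 orbb => /eqP ->.
by rewrite mxE -expr2 sqr_ge0.
Qed.

Lemma vvT_scalar n (v : 'rV[R]_n) : v *m v^T = ((v *m v^T) 0 0)%:M.
Proof. exact: mx11_scalar. Qed.

Lemma refl_sym n (v : 'rV[R]_n) : (reflection v)^T = reflection v.
Proof.
by rewrite /reflection linearB /= trmx1 linearZ /= trmx_mul trmxK.
Qed.

Lemma refl_orth n (v : 'rV[R]_n) : v != 0 -> reflection v *m (reflection v)^T = 1%:M.
Proof.
move=> vnz; rewrite refl_sym /reflection.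
set a := (v *m v^T) 0 0; set Q := v^T *m v.
have anz : a != 0 by exact: vvT_neq0.
have QQ : Q *m Q = a *: Q.
  by rewrite /Q mulmxA -(mulmxA v^T) vvT_scalar -/a mul_mx_scalar -scalemxAl.
rewrite mulmxBl !mulmxBr !mul1mx !mulmx1 -!scalemxAl -!scalemxAr QQ !scalerA.
rewrite (_ : 2 / a * (2 / a) * a = 2 / a + 2 / a); last by field.
by rewrite scalerDl opprB addrK subrK.
Qed.


Lemma orth_mul n (A B : 'M[R]_n) :
  A *m A^T = 1%:M -> B *m B^T = 1%:M -> (A *m B) *m (A *m B)^T = 1%:M.
Proof. by move=> HA HB; rewrite trmx_mul mulmxA -(mulmxA A) HB mulmx1 HA. Qed.

Lemma reflprod_orth n (roots vs : seq 'rV[R]_n) :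
  all (fun v => v != 0) roots -> all (fun v => v \in roots) vs ->
  refl_prod vs *m (refl_prod vs)^T = 1%:M.
Proof.
move=> /allP Hr; elim: vs => [|v vs IH] /=; first by rewrite trmx1 mulmx1.
move=> /andP [vin Hvs]; apply: orth_mul; last exact: IH.
by apply: refl_orth; apply: Hr.
Qed.

Lemma house n (u : 'rV[R]_n.+1) : u *m u^T = 1%:M ->
  exists H : 'M[R]_n.+1, H *m H^T = 1%:M /\ delta_mx 0 ord0 *m H = u.
Proof.
move=> uu; set e := delta_mx 0 ord0 : 'rV[R]_n.+1.
have [ue|une] := eqVneq u e.
  by exists 1%:M; rewrite trmx1 mulmx1 ue mulmx1.
set w := u - e; have wnz : w != 0 by rewrite subr_eq0.
exists (reflection w); split; first exact: refl_orth.
have ee : e *m e^T = 1%:M.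
  by rewrite -rowE; apply/matrixP => i j; rewrite !ord1 !mxE.
have eu : e *m u^T = (u 0 ord0)%:M.
  by rewrite -rowE; apply/matrixP => i j; rewrite !ord1 !mxE.
have ue' : u *m e^T = (u 0 ord0)%:M.
  by rewrite -[u *m e^T]trmxK trmx_mul trmxK eu tr_scalar_mx.
set b := u 0 ord0 - 1.
have ew : e *m w^T = b%:M.
  by rewrite /w linearB /= mulmxBr eu ee /b raddfB.
have ww : (w *m w^T) 0 0 = - (2 * b).
  rewrite /w linearB /= mulmxBl !mulmxBr uu ue' eu ee !mxE eqxx /= /b.
  by rewrite mulr1n; ring.
have anz := @vvT_neq0 n.+1 w wnz.
rewrite /reflection mulmxBr mulmx1 -scalemxAr mulmxA ew mul_scalar_mx scalerA.
rewrite ww (_ : 2 / - (2 * b) * b = -1).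
  by rewrite scaleN1r opprK /w addrC subrK.
have bnz : b != 0 by move: anz; rewrite ww oppr_eq0 mulf_eq0 negb_or => /andP [].
by field; rewrite bnz.
Qed.

Lemma sym_inv_diag n (M : 'M[R]_n) : M^T = M -> M *m M = 1%:M ->
  exists O : 'M[R]_n, O *m O^T = 1%:M /\
    exists dv : 'rV[R]_n, O *m M *m O^T = diag_mx dv.
Proof.
elim: n M => [|n IH] M Msym Minv.
  exists 1%:M; split; first by rewrite trmx1 mulmx1.
  by exists 0; apply/matrixP => -[].
set e := delta_mx 0 ord0 : 'rV[R]_n.+1.
have [u0 [dd [u0nz u0M]]] :
    exists u0 : 'rV[R]_n.+1, exists dd : R, u0 != 0 /\ u0 *m M = dd *: u0.
  have [h|h] := eqVneq (e *m (1%:M + M)) 0.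
    exists e, (-1); split.
      apply/negP => /eqP /matrixP /(_ 0 ord0); rewrite !mxE eqxx /=.
      by move/eqP; rewrite oner_eq0.
    move: h; rewrite mulmxDr mulmx1 => h.
    by apply/eqP; rewrite scaleN1r -addr_eq0 addrC h.
  exists (e *m (1%:M + M)), 1; split => //.
  by rewrite scale1r -mulmxA mulmxDl mul1mx Minv addrC.
set a := (u0 *m u0^T) 0 0.
have apos : 0 < a.
  rewrite lt_def (@vvT_neq0 n.+1 u0 u0nz) /= /a mxE sumr_ge0 // => i _.
  by rewrite mxE -expr2 sqr_ge0.
set u := (Num.sqrt a)^-1 *: u0.
have uu : u *m u^T = 1%:M.
  rewrite vvT_scalar; congr (_%:M).
  rewrite /u linearZ /= -scalemxAl -scalemxAr scalerA mxE -/a.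
  have sn : Num.sqrt a != 0 by rewrite gt_eqF // sqrtr_gt0.
  rewrite -[X in _ * X](sqr_sqrtr (ltW apos)); field.
  exact: sn.
have uM : u *m M = dd *: u.
  by rewrite /u -scalemxAl u0M !scalerA mulrC.
have [H [HH eH]] := @house n u uu.
have HtH : H^T *m H = 1%:M by apply: mulmx1C.
set N := H *m M *m H^T.
have Nsym : N^T = N by rewrite /N !trmx_mul trmxK Msym mulmxA.
have Ninv : N *m N = 1%:M.
  rewrite /N !mulmxA -(mulmxA _ H^T H) HtH mulmx1 -(mulmxA H M M) Minv mulmx1.
  exact: HH.
have eN : e *m N = dd *: e.
  rewrite /N !mulmxA eH uM -scalemxAl -eH -mulmxA HH mulmx1 //.
have rowN : forall j, N ord0 j = dd * (j == ord0)%:R.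
  move=> j; have := congr1 (fun A : 'M[R]_(1, n.+1) => A 0 j) eN; rewrite -rowE !mxE /=.
  by [].

have Ndef : N = H *m M *m H^T by [].
clearbody N.
set N' := drsubmx (N : 'M_(1 + n)).
have Nblock : (N : 'M_(1 + n)) = block_mx (dd%:M) 0 0 N'.
  rewrite -[LHS](@submxK _ 1 n 1 n); congr block_mx.
  - apply/matrixP => i j; rewrite !ord1 !mxE.
    rewrite (_ : lshift n 0 = ord0); last by apply/val_inj.
    by rewrite rowN !eqxx mulr1 mulr1n.
  - apply/matrixP => i j; rewrite !ord1 !mxE.
    rewrite (_ : lshift n 0 = ord0); last by apply/val_inj.
    by rewrite rowN (_ : (rshift 1 j == ord0) = false) ?mulr0.
  - apply/matrixP => i j; rewrite !ord1 !mxE.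
    rewrite -[N in LHS]Nsym mxE.
    rewrite (_ : lshift n 0 = ord0); last by apply/val_inj.
    by rewrite rowN (_ : (rshift 1 i == ord0) = false) ?mulr0.
have N'sym : N'^T = N' by rewrite /N' trmx_drsub Nsym.
have N'inv : N' *m N' = 1%:M.
  move: Ninv; rewrite Nblock (@mulmx_block _ 1 n 1 n 1 n) (@scalar_mx_block _ 1 n 1) => Hb; have [_ _ _] := (@eq_block_mx _ 1 n 1 n _ _ _ _ _ _ _ _ Hb).
  by rewrite !mul0mx add0r.
have [O' [HO' [dv' Hdv']]] := IH N' N'sym N'inv.
set B := block_mx (1%:M : 'M_1) 0 0 O' : 'M[R]_(1 + n).
have BB : B *m B^T = 1%:M.
  rewrite /B tr_block_mx mulmx_block !trmx0 trmx1 !mulmx0 !mul0mx !addr0 !add0r.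
  by rewrite mulmx1 HO' -scalar_mx_block.
exists (B *m H); split; first exact: orth_mul.
exists (row_mx (const_mx dd : 'rV[R]_1) dv').
have -> : B *m H *m M *m (B *m H)^T = B *m (N : 'M_(1 + n)) *m B^T.
  by rewrite Ndef trmx_mul !mulmxA.
rewrite Nblock /B tr_block_mx !trmx0 trmx1 !mulmx_block.
rewrite !mulmx0 !mul0mx !addr0 !add0r !mulmx1 !mul1mx Hdv'.
by rewrite (@diag_mx_row _ n 1) diag_const_mx mul0mx.
Qed.
End Mat.

Section Final.
Variables (R : realType) (p : nat).
Local Notation Pl := (Defs.Poly R p).
Local Notation C := (R[i]).
Local Notation var := (@Defs.var R p).
Local Notation ylo := (@Defs.ylo R p).
Local Notation der := (@Defs.der R p).
Local Notation eps := (@Defs.eps R).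

Lemma der0 b a k : der b a k 0 = 0.
Proof. exact: mderiv0. Qed.
Lemma derN b a k f : der b a k (- f) = - der b a k f.
Proof. exact: mderivN. Qed.
Lemma derCM b a k (c : C) f : der b a k (c%:MP * f) = c%:MP * der b a k f.
Proof. exact: mderiv_mulC. Qed.

Lemma der_ylo b a k b' a' l :
  der b a k (ylo b' a' l) = if (b' == b) && (l == k) then (eps a a')%:MP else 0.
Proof.
rewrite /Defs.ylo der_sum.
under eq_bigr do rewrite derZ der_var sc_nat.
rewrite (eq_bigr (fun c => if c == a then
   (if (b' == b) && (l == k) then (eps c a')%:MP else 0) else 0)).
  by rewrite (bigD1 a) //= eqxx big1 ?addr0 // => i /negbTE ->.
move=> c _; rewrite !xpair_eqE.
by case: (b' == b); case: (c == a); case: (l == k).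
Qed.

Lemma DD k' l' k l :
  der true ord_max l' (der false ord_max k' (ylo false ord0 k * ylo true ord0 l))
  = ((k == k') && (l == l'))%:R.
Proof.
rewrite derM !der_ylo /= mulr0 addr0.
case: (k == k'); last by rewrite mul0r der0.
rewrite derCM der_ylo /=.
case: (l == l'); last by rewrite mulr0.
by rewrite -mpolyCM /Defs.eps /= mulrNN mulr1.
Qed.


Lemma i_neq0 : ('i : C) != 0.
Proof.
apply/eqP => h; have := sqr_i R; rewrite h expr0n /= => /eqP.
by rewrite eq_sym oppr_eq0 oner_eq0.
Qed.

Lemma Dext (c : 'I_p -> 'I_p -> R) k' l' :
  der true ord_max l' (der false ord_max k'
    (- ('i *: \sum_(k < p) \sum_(l < p) cR (c k l) *: (ylo false ord0 k * ylo true ord0 l))))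
  = - ('i *: (cR (c k' l'))%:MP).
Proof.
rewrite derN derZ der_sum derN derZ der_sum.
under eq_bigr do rewrite (der_sum _ _ false) (der_sum _ _ true).
under eq_bigr do under eq_bigr do rewrite derZ derZ DD sc_nat.
rewrite (eq_bigr (fun k => if k == k' then (cR (c k l'))%:MP else 0)).
  by rewrite (sum_delta _ _ (fun k => (cR (c k l'))%:MP)).
move=> k _; case: (k == k') => /=; last by rewrite big1.
by rewrite (sum_delta _ _ (fun l => (cR (c k l))%:MP)).
Qed.

Lemma extract (c c' : 'I_p -> 'I_p -> R) :
  - ('i *: \sum_(k < p) \sum_(l < p) cR (c k l) *: (ylo false ord0 k * ylo true ord0 l)) =
  - ('i *: \sum_(k < p) \sum_(l < p) cR (c' k l) *: (ylo false ord0 k * ylo true ord0 l)) ->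
  forall k l, c k l = c' k l.
Proof.
move=> E k l.
have H1 : der true ord_max l (der false ord_max k
    (- ('i *: \sum_(k < p) \sum_(l < p) cR (c k l) *: (ylo false ord0 k * ylo true ord0 l)))) =
  der true ord_max l (der false ord_max k
    (- ('i *: \sum_(k < p) \sum_(l < p) cR (c' k l) *: (ylo false ord0 k * ylo true ord0 l)))).
  by rewrite E.
move: H1; rewrite !Dext => /oppr_inj /(scalerI i_neq0) /(can_inj (@mpolyCK _ _)).
exact: complexI.
Qed.

Lemma Dvier_1 (Rm Rb : 'M[R]_p) a ad :
  Dvier Rm Rb a ad 1 =
  - ('i *: \sum_(k < p) \sum_(l < p) Pminus Rm Rb k l *: (ylo false a k * ylo true ad l)).
Proof.
rewrite /Dvier scaler_sumr -sumrN; apply: eq_bigr => k _.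
rewrite scaler_sumr -sumrN; apply: eq_bigr => l _.
rewrite !der1 der0 !mulr0 addr0 scaler0 sub0r subr0 mulr1 scalerA.
by [].
Qed.

Lemma RHS_1 (O : 'M[R]_p) (s : 'I_p -> bool) a ad :
  relabel O (\sum_(n < p) (if s n then Dadj n a ad 1 else Dtw n a ad 1)) =
  - ('i *: \sum_(k < p) \sum_(l < p)
        cR (\sum_(n < p) (if s n then 0 else O n k * O n l)) *: (ylo false a k * ylo true ad l)).
Proof.
rewrite relabel_sum.
transitivity (\sum_(n < p) - ('i *: (if s n then 0 else
    \sum_(k < p) \sum_(l < p) cR (O n k * O n l) *: (ylo false a k * ylo true ad l)))).
  apply: eq_bigr => n _; case: (s n).
    have r0 : relabel O (0 : Pl) = 0 by exact: rmorph0.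
    by rewrite /Dadj !der1 !mulr0 addr0 r0 scaler0 oppr0.
  rewrite /Dtw !der1 der0 mulr1 subr0 relabelN relabelZ relabelM !relabel_ylo prodsum.
  congr (- ('i *: _)); apply: eq_bigr => k _; apply: eq_bigr => l _.
  by rewrite cRM.
rewrite sumrN -scaler_sumr; congr (- ('i *: _)).
transitivity (\sum_(n < p) \sum_(k < p) \sum_(l < p)
   cR (if s n then 0 else O n k * O n l) *: (ylo false a k * ylo true ad l)).
  apply: eq_bigr => n _; case: (s n); last by [].
  by rewrite big1 // => k _; rewrite big1 // => l _; rewrite /cR scale0r.
rewrite exchange_big /=; apply: eq_bigr => k _.
rewrite exchange_big /=; apply: eq_bigr => l _.
by rewrite cR_sum scaler_suml.
Qed.

End Final.

Section Final2.
Variables (R : realType) (p : nat).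
Local Notation Pl := (Defs.Poly R p).
Local Notation C := (R[i]).
Local Notation ylo := (@Defs.ylo R p).
Local Notation der := (@Defs.der R p).

Lemma Ychain (O : 'M[R]_p) : O^T *m O = 1%:M -> forall b a k,
  ylo b a k = \sum_(n < p) cR (O n k) *: relabel O (ylo b a n).
Proof.
move=> OtO b a k.
rewrite (eq_bigr (fun n => \sum_(m < p) cR (O n k * O n m) *: ylo b a m)); last first.
  move=> n _; rewrite relabel_ylo scaler_sumr; apply: eq_bigr => m _.
  by rewrite scalerA cRM.
rewrite exchange_big /=.
rewrite (eq_bigr (fun m => if m == k then ylo b a m else 0)).
  by rewrite (sum_delta _ _ (fun m => ylo b a m)).
move=> m _; rewrite -scaler_suml -cR_sum.
have -> : \sum_(i < p) O i k * O i m = (O^T *m O) k m.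
  by rewrite mxE; apply: eq_bigr => i _; rewrite mxE.
by rewrite OtO mxE eq_sym; case: (m == k); rewrite /cR ?scale1r ?scale0r.
Qed.

Definition PpM (Rm Rb : 'M[R]_p) : 'M[R]_p :=
  \matrix_(k, l) (2^-1 * \sum_(n < p) ((1%:M : 'M[R]_p) k n * (1%:M : 'M[R]_p) l n + Rm k n * Rb l n)).
Definition PmM (Rm Rb : 'M[R]_p) : 'M[R]_p :=
  \matrix_(k, l) (2^-1 * \sum_(n < p) ((1%:M : 'M[R]_p) k n * (1%:M : 'M[R]_p) l n - Rm k n * Rb l n)).

Lemma Dvier_DV Rm Rb a ad f :
  Dvier Rm Rb a ad f = DV R p der ylo (PpM Rm Rb) (PmM Rm Rb) a ad f.
Proof.
rewrite /Dvier /DV; apply: eq_bigr => k _; apply: eq_bigr => l _.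
by rewrite /PpM /PmM /Pplus /Pminus !mxE.
Qed.

Lemma Pminus_E Rm Rb k l : Pminus Rm Rb k l = cR (PmM Rm Rb k l).
Proof. by rewrite /PmM /Pminus mxE. Qed.

Lemma sum11 (k l : 'I_p) :
  \sum_(n < p) (1%:M : 'M[R]_p) k n * (1%:M : 'M[R]_p) l n = (1%:M : 'M[R]_p) k l.
Proof.
transitivity (((1%:M : 'M[R]_p) *m (1%:M : 'M[R]_p)^T) k l).
  by rewrite mxE; apply: eq_bigr => n _; rewrite [(1%:M^T) n l]mxE.
by rewrite trmx1 mulmx1.
Qed.

Lemma sumRR (Rm Rb : 'M[R]_p) (k l : 'I_p) :
  \sum_(n < p) Rm k n * Rb l n = (Rm *m Rb^T) k l.
Proof. by rewrite mxE; apply: eq_bigr => n _; rewrite mxE. Qed.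

Lemma PpM_E Rm Rb : PpM Rm Rb = 2^-1 *: (1%:M + Rm *m Rb^T).
Proof.
apply/matrixP => k l; rewrite /PpM !mxE big_split /= sum11 sumRR.
by rewrite ?mxE.
Qed.

Lemma PmM_E Rm Rb : PmM Rm Rb = 2^-1 *: (1%:M - Rm *m Rb^T).
Proof.
apply/matrixP => k l; rewrite /PmM !mxE sumrB /= sum11 sumRR.
by rewrite ?mxE.
Qed.

End Final2.

Section Mats.
Variables (R : realType) (p : nat).

Lemma forward_mat (M O : 'M[R]_p) (s : 'I_p -> bool) :
  O *m O^T = 1%:M ->
  (forall k l, (2^-1 *: (1%:M - M)) k l = \sum_(n < p) (if s n then 0 else O n k * O n l)) ->
  M *m M = 1%:M.
Proof.
move=> HO K.
have OtO : O^T *m O = 1%:M by apply: mulmx1C.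
set tv : 'rV[R]_p := \row_n (if s n then 0 else 1).
have Pm : 2^-1 *: (1%:M - M) = O^T *m diag_mx tv *m O.
  apply/matrixP => k l; rewrite K mxE; apply: eq_bigr => j _.
  rewrite mul_mx_diag !mxE.
  by case: (s j); rewrite ?mulr0 ?mul0r ?mulr1.
set E := 1%:M - 2 *: diag_mx tv.
have Meq : M = O^T *m E *m O.
  rewrite /E mulmxBr mulmxBl mulmx1 OtO -scalemxAr -scalemxAl -Pm scalerA.
  by rewrite mulfV ?pnatr_eq0 // scale1r opprB addrC subrK.
have EE : E *m E = 1%:M.
  have -> : E = diag_mx (const_mx 1 - 2 *: tv).
    by rewrite /E [diag_mx (_ - _)]linearB /= [diag_mx (_ *: _)]linearZ /= diag_const_mx.
  rewrite mul_diag_mx; apply/matrixP => i j; rewrite !mxE.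
  by case: (i == j); case: (s i); rewrite /= ?mulr0n ?mulr1n; ring.
rewrite Meq !mulmxA -(mulmxA _ O O^T) HO mulmx1 -(mulmxA _ E E) EE mulmx1.
exact: OtO.
Qed.

Lemma backward_mat (M : 'M[R]_p) : M *m M^T = 1%:M -> M *m M = 1%:M ->
  exists O : 'M[R]_p, O *m O^T = 1%:M /\ exists s : 'I_p -> bool,
    (forall n m, (O *m (2^-1 *: (1%:M + M)) *m O^T) n m = ((n == m) && s n)%:R) /\
    (forall n m, (O *m (2^-1 *: (1%:M - M)) *m O^T) n m = ((n == m) && ~~ s n)%:R).
Proof.
move=> MMt MM.
have MtM : M^T *m M = 1%:M by apply: mulmx1C.
have Msym : M^T = M by rewrite -[M^T]mulmx1 -MM mulmxA MtM mul1mx.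
have [O [HO [dv Hdv]]] := @sym_inv_diag R p M Msym MM.
have OtO : O^T *m O = 1%:M by apply: mulmx1C.
have DD : diag_mx dv *m diag_mx dv = 1%:M.
  rewrite -Hdv !mulmxA -(mulmxA _ O^T O) OtO mulmx1 -(mulmxA _ M M) MM mulmx1.
  exact: HO.
have dvE n : dv 0 n = if dv 0 n == 1 then 1 else -1.
  have /matrixP/(_ n n) := DD; rewrite mul_diag_mx !mxE eqxx /= mulr1n => h.
  have : dv 0 n ^+ 2 == 1 by rewrite expr2 h.
  rewrite sqrf_eq1 => /orP [/eqP ->|/eqP ->]; first by rewrite eqxx.
  rewrite (_ : (-1 == 1) = false) //.
  by rewrite eq_sym -subr_eq0 opprK -mulr2n pnatr_eq0.
exists O; split => //; exists (fun n => dv 0 n == 1); split => n m.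
  rewrite -scalemxAr -scalemxAl mulmxDr mulmxDl mulmx1 HO Hdv !mxE.
  case: (n == m) => /=; last by rewrite mulr0n addr0 mulr0.
  rewrite mulr1n; move: (dvE n); case: (dv 0 n == 1) => -> /=; by field.
rewrite -scalemxAr -scalemxAl mulmxBr mulmxBl mulmx1 HO Hdv !mxE.
case: (n == m) => /=; last by rewrite mulr0n subr0 mulr0.
rewrite mulr1n; move: (dvE n); case: (dv 0 n == 1) => -> /=; by field.
Qed.
End Mats.

Local Close Scope complex_scope.

Theorem mainTheorem1 (R : realType) (p : nat) (roots : seq 'rV[R]_p)
    (Rm Rb : 'M[R]_p) :
  finite_coxeter roots ->
  in_reflgroup roots Rm -> in_reflgroup roots Rb ->
  disentangled Rm Rb <-> (Rm *m Rb^T) *m (Rm *m Rb^T) = 1%:M.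
Proof.
move=> [rnz _ _] [vs1 [H1 E1]] [vs2 [H2 E2]].
have Om : Rm *m Rm^T = 1%:M by rewrite E1; exact: (@reflprod_orth R p roots vs1 rnz H1).
have Ob : Rb *m Rb^T = 1%:M by rewrite E2; exact: (@reflprod_orth R p roots vs2 rnz H2).
have MMt : (Rm *m Rb^T) *m (Rm *m Rb^T)^T = 1%:M.
  apply: orth_mul => //; rewrite trmxK; exact: mulmx1C.
split.
- move=> [O [s [HO HD]]].
  apply: (@forward_mat R p (Rm *m Rb^T) O s HO) => k l.
  have E := HD ord0 ord0 1.
  have E' := etrans (f_equal (Dvier Rm Rb ord0 ord0) (esym (relabel1 R p O))) E.
  rewrite Dvier_1 RHS_1 in E'.
  have E'' : - ('i *: \sum_(k < p) \sum_(l < p) cR (PmM R p Rm Rb k l) *: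
                  (@Defs.ylo R p false ord0 k * @Defs.ylo R p true ord0 l)) =
             - ('i *: \sum_(k < p) \sum_(l < p)
                  cR (\sum_(n < p) (if s n then 0 else O n k * O n l)) *:
                  (@Defs.ylo R p false ord0 k * @Defs.ylo R p true ord0 l)).
    rewrite -E'; congr (- ('i *: _)); apply: eq_bigr => k' _; apply: eq_bigr => l' _.
    by rewrite Pminus_E.
  have K := @extract R p (fun k l => PmM R p Rm Rb k l)
     (fun k l => \sum_(n < p) (if s n then 0 else O n k * O n l)) E'' k l.
  by rewrite -K PmM_E.
- move=> MM.
  have [O [HO [s [Hp Hm]]]] := @backward_mat R p (Rm *m Rb^T) MMt MM.
  exists O, s; split; first exact: HO.
  move=> a ad g.
  have OtO : O^T *m O = 1%:M by apply: mulmx1C.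
  rewrite Dvier_DV (@DV_phi R p O (relabel O) (@Defs.der R p) (@Defs.ylo R p)
     (relabelD R p O) (relabelM R p O) (derD R p) (derZ R p) (chain R p O)
     (Ychain R p O OtO)).
  rewrite PpM_E PmM_E.
  apply: etrans; first exact: (congr2 (fun x y => x - 'i *: y)
     (diag_sum R p _ s (fun n m => relabel O (Ap R p (@Defs.der R p) (@Defs.ylo R p) a ad g n m)) Hp)
     (diag_sum R p _ (fun n => ~~ s n) (fun n m => relabel O (Bp R p (@Defs.der R p) (@Defs.ylo R p) a ad g n m)) Hm)).
  rewrite [RHS]relabel_sum.
  rewrite [in LHS]scaler_sumr -sumrB; apply: eq_bigr => n _.
  case: (s n) => /=.
    by rewrite scaler0 subr0.
  by rewrite sub0r /Dtw relabelN relabelZ.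
Qed.
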